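(* Assume (H3) with a common penalty function $g$ that is positively 1-homogeneous ($g(\lambda x)=\lambda g(x)$ for all $\lambda\ge0$, $x\le 0$). Let $c\in[0,u]$ be a constant and consider the $(d+1)$-dimensional risk vector $(c,X_1,\ldots,X_d)$ whose first component is deterministic and equal to $c$. Assume (H1) holds for the indicator $I$ associated with $(c,X_1,\ldots,X_d)$ and capital $u$ (on $\mathcal{U}^{d+1}_u$), and for the indicator $I$ associated with $(X_1,\ldots,X_d)$ and capital $u-c$ (on $\mathcal{U}^{d}_{u-c}$). Then $A_{c,X_1,\ldots,X_d}(u)=(c,A_{X_1,\ldots,X_d}(u-c))$, the concatenation of $c$ with the vector $A_{X_1,\ldots,X_d}(u-c)$.
   Context: For a random vector $\mathbf Y=(Y_1,\ldots,Y_m)$ of nonnegative random variables and a capital $w\ge 0$, let $\mathcal{U}^m_w=\{v\in[0,w]^m:\sum_k v_k=w\}$ and define the indicator $I_{\mathbf Y,w}(v)=\sum_{k=1}^m \mathbb{E}[g_k(v_k-Y_k)\mathbf 1_{\{Y_k>v_k\}}\mathbf 1_{\{\sum_{l=1}^m Y_l\le w\}}]$, $v\in\mathcal{U}^m_w$, where the penalty functions $g_k:(-\infty,0]\to[0,\infty)$ are $C^1$, convex, with $g_k(0)=0$. (H1): $I_{\mathbf Y,w}$ has a unique minimizer on $\mathcal{U}^m_w$, denoted $A_{Y_1,\ldots,Y_m}(w)$ (the optimal allocation). (H3): all penalty functions equal a common $g$. Here $(X_1,\ldots,X_d)$ is a vector of nonnegative random variables and $u\ge0$. *)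

(* Defs.v *)
From HB Require Import structures.
From mathcomp Require Import all_boot all_order all_algebra.
From mathcomp Require Import all_classical all_reals all_analysis.
Set Implicit Arguments. Unset Strict Implicit. Unset Printing Implicit Defensive.
Import Order.TTheory GRing.Theory Num.Theory.
Import numFieldNormedType.Exports.
Local Open Scope classical_set_scope.
Local Open Scope ring_scope.

(* Penalty function g : (-oo,0] -> [0,oo), C^1, convex, g 0 = 0.
   g is given as a total function R -> R; only its values on (-oo,0] matter. *)
Definition penalty {R : realType} (g : R -> R) : Prop :=
  [/\ g 0 = 0,
      (forall x : R, x <= 0 -> 0 <= g x),
      (forall x y t : R, x <= 0 -> y <= 0 -> 0 <= t <= 1 ->
         g (t * x + (1 - t) * y) <= t * g x + (1 - t) * g y) &
      [/\ (forall x : R, x < 0 -> derivable g x 1),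
      {in [set x : R | x < 0], continuous (derive1 g)},
      cvg ((derive1 g) x @[x --> 0%R^'-]) &
      g x @[x --> 0%R^'-] --> g 0]].

Definition pos_homogeneous {R : realType} (g : R -> R) : Prop :=
  forall (lam x : R), 0 <= lam -> x <= 0 -> g (lam * x) = lam * g x.

Definition Uset {R : realType} (m : nat) (w : R) : set ('I_m -> R) :=
  [set v | (forall k, 0 <= v k <= w) /\ \sum_(k < m) v k = w].

Arguments Uset {R} m w.

(* I_{Y,w}(v), with common penalty g (hypothesis (H3)); the integrand is
   nonnegative, so the expectation is taken in the extended reals. *)
Definition Ind {d : measure_display} {T : measurableType d} {R : realType}
  (P : probability T R) (g : R -> R) (m : nat) (Y : 'I_m -> T -> R) (w : R)
  (v : 'I_m -> R) : \bar R :=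
  (\sum_(k < m)
     \int[P]_x (if (v k < Y k x) && (\sum_(l < m) Y l x <= w)
                then g (v k - Y k x) else 0)%:E)%E.

Definition is_argmin {X : Type} {R : realType} (f : X -> \bar R) (A : set X)
  (v : X) : Prop := A v /\ forall w, A w -> (f v <= f w)%E.

Definition H1 {X : Type} {R : realType} (f : X -> \bar R) (A : set X) : Prop :=
  exists v, is_argmin f A v /\ forall w, is_argmin f A w -> w = v.

Definition vcons {A : Type} (m : nat) (c : A) (b : 'I_m -> A) : 'I_m.+1 -> A :=
  fun k => oapp b c (unlift ord0 k).

(* Main.v *)
Require Import Defs.
From HB Require Import structures.
From mathcomp Require Import all_boot all_order all_algebra.
From mathcomp Require Import all_classical all_reals all_analysis.
From mathcomp Require Import measurable_realfun measurable_fun_approximation lebesgue_integral_nonneg lebesgue_integral_monotone_convergence.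
From mathcomp Require Import ring lra.
Import Order.TTheory GRing.Theory Num.Theory.
Local Open Scope classical_set_scope.
Local Open Scope ring_scope.

Set Implicit Arguments.
Section S.
Context (dsp : measure_display) (T : measurableType dsp) (R : realType).

Definition Fk (al : R) (m : nat) (Y : 'I_m -> T -> R) (w : R) (v : 'I_m -> R)
  (k : 'I_m) (x : T) : R :=
  if \sum_(l < m) Y l x <= w then al * Num.max (Y k x - v k) 0 else 0.

Arguments Fk al {m} Y w v k x.
Definition Gs (al : R) (m : nat) (Y : 'I_m -> T -> R) (w : R) (v : 'I_m -> R) (x : T) : R := \sum_(k < m) Fk al Y w v k x.

Arguments Gs al {m} Y w v x.
Lemma mGs al m (Y : 'I_m -> T -> R) w v : (forall k, measurable_fun setT (Y k)) ->
  measurable_fun setT (EFin \o Gs al Y w v).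
Proof.
move=> mY; apply/measurable_EFinP.
apply: measurable_sum => k; apply: measurable_fun_ifT.
- have ms : measurable_fun setT (fun x => \sum_(l < m) Y l x) by exact: measurable_sum.
  exact: (measurable_fun_ler ms (measurable_cst w)).
- apply: measurable_funM; first exact: measurable_cst.
  apply: measurable_maxr; last exact: measurable_cst.
  apply: measurable_funB => //; exact: measurable_cst.
- exact: measurable_cst.
Qed.

Lemma mFk al m (Y : 'I_m -> T -> R) w v k : (forall k, measurable_fun setT (Y k)) ->
  measurable_fun setT (EFin \o Fk al Y w v k).
Proof.
move=> mY; apply/measurable_EFinP.
apply: measurable_fun_ifT.
- have ms : measurable_fun setT (fun x => \sum_(l < m) Y l x) by exact: measurable_sum.
  exact: (measurable_fun_ler ms (measurable_cst w)).
- apply: measurable_funM; first exact: measurable_cst.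
  apply: measurable_maxr; last exact: measurable_cst.
  apply: measurable_funB => //; exact: measurable_cst.
- exact: measurable_cst.
Qed.

Lemma Fk_ge0 al m (Y : 'I_m -> T -> R) w v k x : 0 <= al -> 0 <= Fk al Y w v k x.
Proof.
move=> al0; rewrite /Fk; case: ifP => // _; apply: mulr_ge0 => //.
by rewrite le_max lexx orbT.
Qed.

Lemma Gs_ge0 al m (Y : 'I_m -> T -> R) w v x : 0 <= al -> 0 <= Gs al Y w v x.
Proof. by move=> al0; apply: sumr_ge0 => k _; exact: Fk_ge0. Qed.

Lemma Ind_eq (P : probability T R) (g : R -> R) al m (Y : 'I_m -> T -> R) w v :
  0 <= al -> (forall x, x <= 0 -> g x = al * - x) ->
  (forall k, measurable_fun setT (Y k)) ->
  Ind P g Y w v = (\int[P]_x (Gs al Y w v x)%:E)%E.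
Proof.
move=> al0 hg mY.
rewrite /Gs.
under [RHS]eq_integral do rewrite -sumEFin.
rewrite ge0_integral_sum //; last first.
  by move=> k x _; rewrite lee_fin; exact: Fk_ge0.
  by move=> k; exact: mFk.
apply: eq_bigr => k _; apply: eq_integral => x _; congr EFin.
rewrite /Fk; case: (_ <= w); rewrite ?andbT ?andbF //.
case: ltP => h.
  rewrite hg; last by rewrite subr_le0 ltW.
  by rewrite opprB max_l // subr_ge0 ltW.
by rewrite max_r ?mulr0 // subr_le0.
Qed.

Lemma Gs_vcons al d (X : 'I_d -> T -> R) c u (v : 'I_d.+1 -> R) x :
  Gs al (vcons (fun _ => c) X) u v x =
  (if \sum_(l < d) X l x <= u - c then al * Num.max (c - v ord0) 0 else 0)
  + Gs al X (u - c) (fun i => v (lift ord0 i)) x.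
Proof.
rewrite /Gs /Fk big_ord_recl.
have -> : \sum_(l < d.+1) vcons (fun _ => c) X l x = c + \sum_(l < d) X l x.
  by rewrite big_ord_recl /vcons unlift_none /=; congr (_ + _);
    apply: eq_bigr => i _; rewrite liftK.
have -> : (c + \sum_(l < d) X l x <= u) = (\sum_(l < d) X l x <= u - c).
  by rewrite lerBrDl.
rewrite /vcons unlift_none /=; congr (_ + _).
by apply: eq_bigr => i _; rewrite liftK.
Qed.

Lemma max_tri (a v w : R) : Num.max (a - w) 0 <= Num.max (a - v) 0 + Num.max (v - w) 0.
Proof.
rewrite !maxEle.
case: (leP (a - w) 0); case: (leP (a - v) 0); case: (leP (v - w) 0); lra.
Qed.

Lemma key_ineq al d (X : 'I_d -> T -> R) w (e : R) (v' w' : 'I_d -> R) x :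
  0 <= al -> \sum_(i < d) Num.max (v' i - w' i) 0 <= e ->
  Gs al X w w' x <=
  (if \sum_(l < d) X l x <= w then al * e else 0) + Gs al X w v' x.
Proof.
move=> al0 he; rewrite /Gs /Fk.
case: (\sum_(l < d) X l x <= w); last by rewrite !big1 // ?addr0.
rewrite -!mulr_sumr -mulrDr; apply: ler_wpM2l => //.
apply: (@le_trans _ _ (\sum_(i < d) (Num.max (X i x - v' i) 0 + Num.max (v' i - w' i) 0))).
  by apply: ler_sum => i _; exact: max_tri.
by rewrite big_split /= addrC lerD2r.
Qed.

Lemma le_sum_term n (f : 'I_n -> R) i : (forall j, 0 <= f j) -> f i <= \sum_(j < n) f j.
Proof. by move=> f0; rewrite (bigD1 i) //= lerDl sumr_ge0. Qed.

Lemma exists_w d (u c : R) (v : 'I_d.+1 -> R) (b : 'I_d -> R) :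
  0 <= c <= u -> Uset d.+1 u v -> Uset d (u - c) b ->
  exists w', Uset d (u - c) w' /\
    \sum_(i < d) Num.max (v (lift ord0 i) - w' i) 0 <= Num.max (c - v ord0) 0.
Proof.
move=> /andP[c0 cu] [vb vs] [bb bs].
set v' := fun i => v (lift ord0 i).
have v's : \sum_(i < d) v' i = u - v ord0.
  by move: vs; rewrite big_ord_recl => <-; rewrite addrAC subrr add0r.
have v'0 i : 0 <= v' i by case/andP: (vb (lift ord0 i)).
have v'le i : v' i <= u - v ord0 by rewrite -v's; exact: le_sum_term.
have [v00 v0u] := andP (vb ord0).
case: (ltP (v ord0) c) => hv0.
- have hpos : 0 < u - v ord0 by rewrite subr_gt0; exact: lt_le_trans cu.
  set t := (u - c) / (u - v ord0).
  have tE : t * (u - v ord0) = u - c by rewrite /t divfK // gt_eqF.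
  have t0 : 0 <= t by rewrite /t divr_ge0 // ?subr_ge0 // ltW.
  have t1 : t <= 1 by rewrite /t ler_pdivrMr // mul1r lerB // ltW.
  exists (fun i => t * v' i); split; first split.
  + move=> k; rewrite mulr_ge0 //=; rewrite -tE; exact: ler_wpM2l.
  + by rewrite -mulr_sumr v's.
  apply: (@le_trans _ _ (\sum_(i < d) (1 - t) * v' i)).
    apply: ler_sum => i _; rewrite max_l; first by rewrite /v' mulrBl mul1r.
    by have := v'0 i; rewrite /v' /=; nra.
  rewrite -mulr_sumr v's mulrBl mul1r tE.
  by rewrite le_max; apply/orP; left; rewrite le_eqVlt; apply/orP; left; apply/eqP; ring.
- set s := (v ord0 - c) / (u - c).
  have sE : s * (u - c) = v ord0 - c.
    have [uc|uc] := eqVneq (u - c) 0.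
      rewrite uc mulr0; apply/esym/eqP; rewrite subr_eq0 eq_le hv0 andbT.
      by move/eqP: uc; rewrite subr_eq0 => /eqP <-.
    by rewrite /s divfK.
  have s0 : 0 <= s by rewrite /s divr_ge0 // subr_ge0.
  exists (fun i => v' i + s * b i); split; first split.
  + move=> k; have [b0 bu] := andP (bb k).
    have h1 : s * b k <= v ord0 - c by rewrite -sE ler_wpM2l.
    have h2 : 0 <= s * b k by rewrite mulr_ge0.
    have h3 := v'le k; have h4 := v'0 k.
    by apply/andP; split; lra.
  + rewrite /= big_split /= -mulr_sumr bs v's sE; ring.
  rewrite big1 ?le_max ?lexx ?orbT // => i _.
  have [b0 _] := andP (bb i).
  by rewrite max_r // opprD addNKr oppr_le0 mulr_ge0.
Qed.
End S.


Unset Implicit Arguments.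

Theorem mainTheorem3 (dsp : measure_display) (T : measurableType dsp)
  (R : realType) (P : probability T R) (g : R -> R) (d : nat)
  (X : 'I_d -> T -> R) (u c : R) :
  penalty g -> pos_homogeneous g ->
  (forall i, measurable_fun setT (X i)) ->
  (forall i x, 0 <= X i x) ->
  0 <= u -> 0 <= c <= u ->
  H1 (Ind P g (vcons (fun _ => c) X) u) (Uset d.+1 u) ->
  H1 (Ind P g X (u - c)) (Uset d (u - c)) ->
  forall a b,
    is_argmin (Ind P g (vcons (fun _ => c) X) u) (Uset d.+1 u) a ->
    is_argmin (Ind P g X (u - c)) (Uset d (u - c)) b ->
    a = vcons c b.
Proof.
move=> pg ph mX X0 u0 cint H1a H1b a b ha hb.
have /andP[c0 cu] := cint.
set al := g (-1).
have al0 : 0 <= al.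
  case: pg => _ h _ _; apply: h; rewrite lerN10 //.
have hg : forall x, x <= 0 -> g x = al * - x.
  move=> x hx; have := ph (- x) (-1); rewrite oppr_ge0 lerN10 => /(_ hx isT).
  by rewrite mulrN1 opprK mulrC.
have mY : forall k, measurable_fun setT (vcons (fun _ => c) X k).
  by move=> k; rewrite /vcons; case: unlift => [i|] /=; [exact: mX | exact: measurable_cst].
have [[bb bs] bmin] := hb.
have Ub : Uset d.+1 u (vcons c b).
  split.
    move=> k; rewrite /vcons; case: unlift => [i|] /=; last by rewrite c0 cu.
    by case/andP: (bb i) => h1 h2; apply/andP; split; lra.
  rewrite big_ord_recl /vcons unlift_none /=.
  under eq_bigr => i _ do rewrite liftK.
  by rewrite /= bs; ring.
have Eb : Ind P g (vcons (fun _ => c) X) u (vcons c b) = Ind P g X (u - c) b.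
  rewrite !(Ind_eq P g al _ _ _ al0 hg) //; apply: eq_integral => x _; rewrite Gs_vcons.
  have -> : (fun i => vcons c b (lift ord0 i)) = b by apply/funext => i; rewrite /vcons liftK.
  by rewrite /vcons unlift_none /= subrr maxxx mulr0 if_same add0r.
have hmin : is_argmin (Ind P g (vcons (fun _ => c) X) u) (Uset d.+1 u) (vcons c b).
  split => // v Uv.
  have [w' [Uw' hw']] := exists_w c cint Uv (conj bb bs).
  rewrite Eb; apply: le_trans (bmin _ Uw') _.
  rewrite !(Ind_eq P g al _ _ _ al0 hg) //; apply: ge0_le_integral => //.
  - by move=> x _; rewrite lee_fin; exact: Gs_ge0.
  - exact: mGs.
  - exact: mGs.
  - by move=> x _; rewrite lee_fin Gs_vcons; apply: key_ineq.
case: H1a => vs [_ huniq].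
by rewrite (huniq _ ha) (huniq _ hmin).
Qed.
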